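(* Let $b\ge 2$ be an integer, $d\in\{0,1,\dots,b-1\}$, and $d'=b-1-d$. For $i\ge1$ put $\gamma'_i=\sum_{0\le a<b,\ a\ne d'}a^i$. Define $v_{0;m}$ for $m\ge0$ recursively by $$(b^{m+1}-b+1)\,v_{0;m}=b^{m+1}+\sum_{i=1}^{m}\binom{m}{i}\gamma'_i\,v_{0;m-i},$$ and for $j\ge1$, $m\ge0$, define $v_{j;m}$ recursively by $$(b^{m+1}-b+1)\,v_{j;m}=\sum_{i=1}^{m}\binom{m}{i}\gamma'_i\,v_{j;m-i}+\sum_{i=0}^{m}\binom{m}{i}(d')^i\,v_{j-1;m-i}$$ (with $0^0=1$). In particular $v_{j;0}=b$ for all $j\ge0$. Then for every $l\ge1$ and $k\ge0$, $$H^{(k)}=\sum_{\substack{0<n<b^{l-1}\\ k(n)=k}}\frac1n\;+\;b\sum_{\substack{b^{l-1}\le n<b^{l}\\ k(n)\le k}}\frac1{n+1}\;+\;\sum_{m=1}^{\infty}\ \sum_{\substack{b^{l-1}\le n<b^{l}\\ k(n)\le k}}\frac{v_{k-k(n);m}}{(n+1)^{m+1}}.$$ Moreover, the numbers $v_{j;m}$ ($j\ge0$, $m\ge1$) satisfy: (i) $0<v_{j;m}\le b$; (ii) for fixed $j$, $(v_{j;m})_{m\ge0}$ is strictly decreasing, except when $b=2$, $d=1$, $j=0$, in which case $v_{0;m}=2$ for all $m$; (iii) for each fixed $m\ge1$, $(v_{j;m})_{j\ge0}$ is strictly decreasing and converges to $b/(m+1)$.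
   Context: For an integer $n\ge0$, its (minimal) base-$b$ representation is the string of base-$b$ digits of $n$ without leading zeros (the empty string for $n=0$); $k(n)$ denotes the number of occurrences of the digit $d$ in this representation. For $k\ge0$, the Irwin sum is $H^{(k)}=\sum_{n\ge1,\ k(n)=k}1/n$ (a convergent series of positive terms; it equals $0$ when $b=2$, $d=1$, $k=0$). *)

(* Defs.v *)
From Stdlib Require Import Reals Arith List.
From Coquelicot Require Import Coquelicot.
Open Scope R_scope.

(* Minimal base-b digits (least significant first); empty for n = 0.
   Fuel n suffices since n / b < n for b >= 2. *)
Fixpoint digits_aux (b fuel n : nat) : list nat :=
  match fuel with
  | O => nil
  | S f => if Nat.eqb n 0 then nil else (n mod b)%nat :: digits_aux b f (n / b)%nat
  end.
Definition digits (b n : nat) : list nat := digits_aux b n n.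

Definition kcount (b d n : nat) : nat := count_occ Nat.eq_dec (digits b n) d.

Fixpoint sumR (n : nat) (f : nat -> R) : R :=
  match n with O => 0 | S n' => sumR n' f + f n' end.

Definition gammap (b d i : nat) : R :=
  sumR b (fun a => if Nat.eqb a (b - 1 - d)%nat then 0 else INR a ^ i).

(* one step of the recursion for v_{j;m}: prev = None for j = 0,
   prev = Some g with g = v_{j-1;.} for j >= 1; f gives v_{j;t} for t < m *)
Definition vstep (b d : nat) (prev : option (nat -> R)) (f : nat -> R) (m : nat) : R :=
  let lead := match prev with
              | None => INR b ^ (S m)
              | Some g => sumR (S m) (fun i => Binomial.C m i * INR (b - 1 - d) ^ i * g (m - i)%nat)
              end in
  (sumR m (fun i' => let i := S i' in Binomial.C m i * gammap b d i * f (m - i)%nat) + lead)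
  / (INR b ^ (S m) - INR b + 1).

Fixpoint vtab (b d : nat) (prev : option (nat -> R)) (m : nat) : nat -> R :=
  match m with
  | O => fun _ => vstep b d prev (fun _ => 0) 0
  | S m' => let f := vtab b d prev m' in
            fun t => if Nat.leb t m' then f t else vstep b d prev f m
  end.

Definition vrow (b d : nat) (prev : option (nat -> R)) (m : nat) : R :=
  vtab b d prev m m.

Fixpoint v (b d j : nat) : nat -> R :=
  match j with
  | O => vrow b d None
  | S j' => vrow b d (Some (v b d j'))
  end.

Definition irwin_term (b d k n : nat) : R :=
  if andb (Nat.ltb 0 n) (Nat.eqb (kcount b d n) k) then / INR n else 0.

Definition H (b d k : nat) : R := Series (irwin_term b d k).

(* Main.v *)
Require Import Defs.
From Stdlib Require Import Reals Arith List Lia Lra Psatz Morphisms Setoid FunctionalExtensionality.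
From Coquelicot Require Import Coquelicot.
Open Scope R_scope.

Lemma sumR_ext n f g : (forall i, (i < n)%nat -> f i = g i) -> sumR n f = sumR n g.
Proof. induction n; simpl; intros H; [reflexivity|]. rewrite IHn; [rewrite H|]; auto. Qed.

Global Instance sumR_proper : Proper (eq ==> pointwise_relation nat eq ==> eq) sumR.
Proof. intros n n' <- f g H. apply sumR_ext; intros; apply H. Qed.

Lemma sumR_plus n f g : sumR n (fun i => f i + g i) = sumR n f + sumR n g.
Proof. induction n; simpl; [lra|]. rewrite IHn; lra. Qed.

Lemma sumR_minus n f g : sumR n (fun i => f i - g i) = sumR n f - sumR n g.
Proof. induction n; simpl; [lra|]. rewrite IHn; lra. Qed.

Lemma sumR_scal n c f : sumR n (fun i => c * f i) = c * sumR n f.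
Proof. induction n; simpl; [lra|]. rewrite IHn; lra. Qed.

Lemma sumR_scalr n c f : sumR n (fun i => f i * c) = sumR n f * c.
Proof. induction n; simpl; [lra|]. rewrite IHn; lra. Qed.

Lemma sumR_zero n : sumR n (fun _ => 0) = 0.
Proof. induction n; simpl; [lra|]. rewrite IHn; lra. Qed.

Lemma sumR_const n c : sumR n (fun _ => c) = INR n * c.
Proof. induction n; cbn [sumR]; [simpl; lra|]. rewrite IHn. rewrite S_INR; lra. Qed.

Lemma sumR_le n f g : (forall i, (i < n)%nat -> f i <= g i) -> sumR n f <= sumR n g.
Proof. induction n; simpl; intros H; [lra|]. apply Rplus_le_compat; auto. Qed.

Lemma sumR_nonneg n f : (forall i, (i < n)%nat -> 0 <= f i) -> 0 <= sumR n f.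
Proof. intros H. rewrite <- (sumR_zero n). apply sumR_le; auto. Qed.

Lemma sumR_ge_term n f i0 : (forall i, (i < n)%nat -> 0 <= f i) -> (i0 < n)%nat -> f i0 <= sumR n f.
Proof.
  induction n; simpl; intros H Hi; [lia|].
  destruct (Nat.eq_dec i0 n) as [->|Hn].
  - assert (0 <= sumR n f) by (apply sumR_nonneg; auto). lra.
  - assert (f i0 <= sumR n f) by (apply IHn; auto; lia). assert (0 <= f n) by auto. lra.
Qed.

Lemma sumR_shift n f : sumR (S n) f = f 0%nat + sumR n (fun i => f (S i)).
Proof. induction n; simpl in *; [lra|]. rewrite IHn; lra. Qed.

Lemma sumR_add n p f : sumR (n + p) f = sumR n f + sumR p (fun i => f (n + i)%nat).
Proof. induction p; simpl; [rewrite Nat.add_0_r; lra|]. rewrite Nat.add_succ_r; simpl. rewrite IHp; lra. Qed.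

Lemma sumR_mul p q f : sumR (p * q) f = sumR p (fun t => sumR q (fun a => f (t * q + a)%nat)).
Proof.
  induction p; simpl; [reflexivity|].
  rewrite Nat.add_comm, sumR_add, IHp. reflexivity.
Qed.

Lemma sumR_swap n p f : sumR n (fun i => sumR p (fun j => f i j)) = sumR p (fun j => sumR n (fun i => f i j)).
Proof.
  induction n; simpl. - rewrite sumR_zero; reflexivity.
  - rewrite IHn, <- sumR_plus. reflexivity.
Qed.

Lemma sumR_rev n f : sumR n f = sumR n (fun i => f (n - 1 - i)%nat).
Proof.
  induction n; [reflexivity|].
  rewrite (sumR_shift n (fun i => f (S n - 1 - i)%nat)). cbn [sumR]. rewrite IHn. replace (S n - 1 - 0)%nat with n by lia.
  rewrite Rplus_comm. f_equal. apply sumR_ext; intros i Hi. f_equal. lia.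
Qed.

Lemma sumR_fR0 n f : sumR (S n) f = sum_f_R0 f n.
Proof. induction n; simpl in *; [lra|]. rewrite <- IHn; reflexivity. Qed.

Lemma sumR_abs n f : Rabs (sumR n f) <= sumR n (fun i => Rabs (f i)).
Proof. induction n; simpl. - rewrite Rabs_R0; lra. - eapply Rle_trans; [apply Rabs_triang|]. lra. Qed.

Lemma sumR_count n p : (p < n)%nat -> sumR n (fun a => if Nat.eqb a p then 0 else 1) = INR n - 1.
Proof.
  induction n; intros H; [lia|]. cbn [sumR].
  destruct (Nat.eq_dec p n) as [->|Hn].
  - rewrite Nat.eqb_refl. rewrite (sumR_ext _ _ (fun _ => 1)).
    + rewrite sumR_const, S_INR; lra.
    + intros i Hi. destruct (Nat.eqb_spec i n); [lia|reflexivity].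
  - rewrite IHn by lia. destruct (Nat.eqb_spec n p); [lia|]. rewrite S_INR; lra.
Qed.

Lemma binom_sumR (x y : R) m : (x + y) ^ m = sumR (S m) (fun i => Binomial.C m i * x ^ i * y ^ (m - i)).
Proof. rewrite sumR_fR0, binomial. reflexivity. Qed.

Lemma C_n_0 n : Binomial.C n 0 = 1.
Proof. unfold Binomial.C. rewrite Nat.sub_0_r. simpl. field. apply INR_fact_neq_0. Qed.

Lemma C_nonneg n i : 0 <= Binomial.C n i.
Proof. unfold Binomial.C. apply Rlt_le, Rdiv_lt_0_compat; [apply INR_fact_lt_0|].
  apply Rmult_lt_0_compat; apply INR_fact_lt_0. Qed.

Definition Pop b d (u : nat -> R) m := sumR (S m) (fun i => Binomial.C m i * gammap b d i * u (m - i)%nat).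
Definition Qop b d (u : nat -> R) m := sumR (S m) (fun i => Binomial.C m i * INR (b - 1 - d) ^ i * u (m - i)%nat).
Definition lead b d j m := match j with O => INR b ^ S m | S j' => Qop b d (v b d j') m end.

Lemma vtab_stable b d p M t : (t <= M)%nat -> vtab b d p M t = vtab b d p t t.
Proof.
  induction M; intros H.
  - assert (t = 0%nat) by lia. subst. reflexivity.
  - cbn [vtab]. destruct (Nat.leb_spec t M).
    + apply IHM; lia.
    + assert (t = S M) by lia. subst. symmetry. cbn [vtab].
      destruct (Nat.leb_spec (S M) M); [lia|reflexivity].
Qed.

Lemma vstep_ext b d p f g m : (forall t, (t < m)%nat -> f t = g t) -> vstep b d p f m = vstep b d p g m.
Proof.
  intros H. unfold vstep. f_equal. f_equal. apply sumR_ext. intros i Hi. rewrite H by lia. reflexivity.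
Qed.

Lemma vrow_eq b d p m : vrow b d p m = vstep b d p (vrow b d p) m.
Proof.
  unfold vrow at 1. destruct m as [|M].
  - cbn [vtab]. apply vstep_ext. intros; lia.
  - cbn [vtab]. try (destruct (Nat.leb_spec (S M) M); [lia|]).
    apply vstep_ext. intros t Ht. unfold vrow. apply vtab_stable; lia.
Qed.

Lemma gammap_0 b d : (d < b)%nat -> gammap b d 0 = INR b - 1.
Proof.
  intros H. unfold gammap. rewrite <- sumR_count with (p := (b-1-d)%nat) by lia.
  apply sumR_ext. intros; simpl. destruct (Nat.eqb _ _); reflexivity.
Qed.

Lemma gammap_nonneg b d i : 0 <= gammap b d i.
Proof. unfold gammap. apply sumR_nonneg. intros a _. destruct (Nat.eqb _ _); [lra|]. apply pow_le, pos_INR. Qed.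

Lemma Pop_split b d u m : (d < b)%nat -> Pop b d u m = (INR b - 1) * u m +
  sumR m (fun i' => Binomial.C m (S i') * gammap b d (S i') * u (m - S i')%nat).
Proof.
  intros H. unfold Pop. rewrite sumR_shift, C_n_0, gammap_0 by auto. rewrite Nat.sub_0_r. ring.
Qed.

Lemma Dpos b m : (2 <= b)%nat -> 1 <= INR b ^ S m - INR b + 1.
Proof.
  intros H. simpl. assert (1 <= INR b ^ m) by (apply pow_R1_Rle; apply (le_INR 1); lia).
  assert (2 <= INR b) by (apply (le_INR 2); lia). nra.
Qed.

Lemma FR b d j m : (2 <= b)%nat -> (d < b)%nat ->
  INR b ^ S m * v b d j m = lead b d j m + Pop b d (v b d j) m.
Proof.
  intros Hb Hd. rewrite Pop_split by auto.
  assert (HD := Dpos b m Hb).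
  destruct j as [|j]; cbn [v lead]; rewrite vrow_eq; unfold vstep; cbn [v]; try unfold Qop;
  match goal with |- _ = ?L + ((_) * ((?X + _) / _) + _) => set (XX := X) end;
  set (Y := INR b ^ S m) in *; field; lra.
Qed.

Lemma sumR_drop n p X : (p < n)%nat -> sumR n (fun a => if Nat.eqb a p then 0 else X a) + X p = sumR n X.
Proof.
  induction n; intros H; [lia|]. cbn [sumR].
  destruct (Nat.eq_dec p n) as [->|Hn].
  - rewrite Nat.eqb_refl. rewrite (sumR_ext _ _ X). lra.
    intros i Hi. destruct (Nat.eqb_spec i n); [lia|reflexivity].
  - rewrite <- IHn by lia. destruct (Nat.eqb_spec n p); [lia|]. lra.
Qed.

Definition S1 b d m := sumR b (fun a => if Nat.eqb a (b - 1 - d) then 0 else (INR a + 1) ^ m).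

Lemma Pop_lin b d u u' a a' m : Pop b d (fun t => a * u t + a' * u' t) m = a * Pop b d u m + a' * Pop b d u' m.
Proof. unfold Pop. rewrite <- !sumR_scal, <- sumR_plus. apply sumR_ext; intros; ring. Qed.
Lemma Qop_lin b d u u' a a' m : Qop b d (fun t => a * u t + a' * u' t) m = a * Qop b d u m + a' * Qop b d u' m.
Proof. unfold Qop. rewrite <- !sumR_scal, <- sumR_plus. apply sumR_ext; intros; ring. Qed.

Lemma Pop_mono b d u u' m : (forall t, (t <= m)%nat -> u t <= u' t) -> Pop b d u m <= Pop b d u' m.
Proof. intros H. unfold Pop. apply sumR_le. intros i Hi. apply Rmult_le_compat_l; [|apply H; lia].
  apply Rmult_le_pos; [apply C_nonneg|apply gammap_nonneg]. Qed.
Lemma Qop_mono b d u u' m : (forall t, (t <= m)%nat -> u t <= u' t) -> Qop b d u m <= Qop b d u' m.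
Proof. intros H. unfold Qop. apply sumR_le. intros i Hi. apply Rmult_le_compat_l; [|apply H; lia].
  apply Rmult_le_pos; [apply C_nonneg|apply pow_le, pos_INR]. Qed.

Lemma Pop_const b d c m : Pop b d (fun _ => c) m = c * S1 b d m.
Proof.
  unfold Pop, S1, gammap. rewrite <- sumR_scal.
  transitivity (sumR (S m) (fun i => sumR b (fun a => c * (Binomial.C m i *
     (if Nat.eqb a (b - 1 - d) then 0 else INR a ^ i))))).
  { apply sumR_ext; intros. rewrite sumR_scal, sumR_scal. ring. }
  rewrite sumR_swap. apply sumR_ext; intros a _.
  destruct (Nat.eqb a _).
  - rewrite (sumR_ext _ _ (fun _ => 0)) by (intros; ring). rewrite sumR_zero; ring.
  - rewrite binom_sumR, <- sumR_scal. apply sumR_ext; intros. rewrite pow1. ring.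
Qed.

Lemma Qop_const b d c m : Qop b d (fun _ => c) m = c * (INR (b - 1 - d) + 1) ^ m.
Proof.
  unfold Qop. rewrite binom_sumR, <- sumR_scal. apply sumR_ext; intros. rewrite pow1. ring.
Qed.

Lemma S1_bound b d m : (d < b)%nat -> S1 b d m <= (INR b - 1) * INR b ^ m.
Proof.
  intros H. unfold S1. rewrite <- sumR_count with (p := (b-1-d)%nat) by lia.
  rewrite <- sumR_scalr. apply sumR_le. intros a Ha. destruct (Nat.eqb _ _); [lra|].
  rewrite Rmult_1_l. apply pow_incr. split. pose proof (pos_INR a); lra.
  rewrite <- S_INR. apply le_INR; lia.
Qed.

Lemma S1_Q_bound b d m : (d < b)%nat -> S1 b d m + (INR (b - 1 - d) + 1) ^ m <= INR b ^ S m.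
Proof.
  intros H. unfold S1. rewrite (sumR_drop b (b-1-d) (fun a => (INR a + 1)^m)) by lia.
  apply Rle_trans with (sumR b (fun _ => INR b ^ m)).
  - apply sumR_le. intros a Ha. apply pow_incr. split. pose proof (pos_INR a); lra.
    rewrite <- S_INR. apply le_INR; lia.
  - rewrite sumR_const. simpl. lra.
Qed.

Lemma S1_nonneg b d m : 0 <= S1 b d m.
Proof. apply sumR_nonneg. intros a _. destruct (Nat.eqb _ _); [lra|]. apply pow_le. pose proof (pos_INR a); lra. Qed.

Definition Prest b d (u : nat -> R) m := sumR m (fun i' => Binomial.C m (S i') * gammap b d (S i') * u (m - S i')%nat).

Lemma Prest_nonneg b d u m : (forall t, (t < m)%nat -> 0 <= u t) -> 0 <= Prest b d u m.
Proof. intros H. apply sumR_nonneg. intros i Hi. apply Rmult_le_pos; [apply Rmult_le_pos; [apply C_nonneg|apply gammap_nonneg]|].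
  apply H; lia. Qed.

Lemma Prest_le b d u c m : (d < b)%nat -> (forall t, (t < m)%nat -> u t <= c) -> Prest b d u m <= c * (S1 b d m - (INR b - 1)).
Proof.
  intros Hd H. assert (E := Pop_split b d (fun _ => c) m Hd). rewrite Pop_const in E.
  assert (Prest b d (fun _ => c) m = c * S1 b d m - (INR b - 1) * c) by (unfold Prest; lra).
  apply Rle_trans with (Prest b d (fun _ => c) m); [|lra].
  apply sumR_le. intros i Hi. apply Rmult_le_compat_l; [|apply H; lia].
  apply Rmult_le_pos; [apply C_nonneg|apply gammap_nonneg].
Qed.

Lemma Prest_lin b d u u' a a' m : Prest b d (fun t => a * u t + a' * u' t) m = a * Prest b d u m + a' * Prest b d u' m.
Proof. unfold Prest. rewrite <- !sumR_scal, <- sumR_plus. apply sumR_ext; intros; ring. Qed.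

Lemma solve_rec b d (u L : nat -> R) m : (2 <= b)%nat -> (d < b)%nat ->
  INR b ^ S m * u m = L m + Pop b d u m ->
  u m = (L m + Prest b d u m) / (INR b ^ S m - INR b + 1).
Proof.
  intros Hb Hd H. rewrite Pop_split in H by auto. fold (Prest b d u m) in H.
  assert (HD := Dpos b m Hb). apply Rmult_eq_reg_r with (INR b ^ S m - INR b + 1); [|lra].
  field_simplify; [|lra]. lra.
Qed.

Lemma gen_bound b d (u L : nat -> R) : (2 <= b)%nat -> (d < b)%nat ->
  (forall m, INR b ^ S m * u m = L m + Pop b d u m) ->
  (forall m, 0 < L m <= INR b * (INR b ^ S m - S1 b d m)) ->
  forall m, 0 < u m <= INR b.
Proof.
  intros Hb Hd HR HL m. induction m as [m IH] using (well_founded_induction lt_wf).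
  rewrite (solve_rec b d u L m Hb Hd (HR m)).
  assert (HD := Dpos b m Hb).
  assert (0 <= Prest b d u m) by (apply Prest_nonneg; intros t Ht; pose proof (IH t Ht); lra).
  assert (Prest b d u m <= INR b * (S1 b d m - (INR b - 1))) by (apply Prest_le; auto; intros t Ht; apply IH; auto).
  specialize (HL m). split.
  - apply Rdiv_lt_0_compat; lra.
  - apply Rmult_le_reg_r with (INR b ^ S m - INR b + 1); [lra|].
    unfold Rdiv. rewrite Rmult_assoc, Rinv_l, Rmult_1_r by lra. nra.
Qed.

Lemma gen_pos b d (u L : nat -> R) : (2 <= b)%nat -> (d < b)%nat ->
  (forall m, INR b ^ S m * u m = L m + Pop b d u m) -> u 0%nat = 0 ->
  (forall m, (1 <= m)%nat -> 0 < L m) ->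
  forall m, (1 <= m)%nat -> 0 < u m.
Proof.
  intros Hb Hd HR H0 HL m. induction m as [m IH] using (well_founded_induction lt_wf). intros Hm.
  rewrite (solve_rec b d u L m Hb Hd (HR m)).
  assert (HD := Dpos b m Hb).
  assert (0 <= Prest b d u m). { apply Prest_nonneg; intros t Ht. destruct t. lra. pose proof (IH (S t) Ht); lia || (apply Rlt_le, IH; auto; lia). }
  specialize (HL m Hm). apply Rdiv_lt_0_compat; lra.
Qed.

Lemma gen_uniq b d (u u' L : nat -> R) : (2 <= b)%nat -> (d < b)%nat ->
  (forall m, INR b ^ S m * u m = L m + Pop b d u m) ->
  (forall m, INR b ^ S m * u' m = L m + Pop b d u' m) ->
  forall m, u m = u' m.
Proof.
  intros Hb Hd HR HR' m. induction m as [m IH] using (well_founded_induction lt_wf).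
  rewrite (solve_rec b d u L m Hb Hd (HR m)), (solve_rec b d u' L m Hb Hd (HR' m)).
  f_equal. f_equal. apply sumR_ext. intros i Hi. rewrite IH by lia. reflexivity.
Qed.

Lemma INR_b_pos b : (2 <= b)%nat -> 2 <= INR b.
Proof. intros; apply (le_INR 2); lia. Qed.

Lemma v_j0 b d j : (2 <= b)%nat -> (d < b)%nat -> v b d j 0 = INR b.
Proof.
  intros Hb Hd. induction j.
  - pose proof (FR b d 0 0 Hb Hd) as H. unfold lead, Pop in H. cbn [sumR] in H.
    rewrite C_n_0, gammap_0 in H by auto. simpl in H. cbn [v]. lra.
  - pose proof (FR b d (S j) 0 Hb Hd) as H. unfold lead, Pop, Qop in H. cbn [sumR] in H.
    rewrite C_n_0, gammap_0 in H by auto. simpl in H. cbn [v] in *. rewrite IHj in H. lra.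
Qed.

Lemma Qop_pos b d u m : (forall t, (t <= m)%nat -> 0 <= u t) -> 0 < u m -> 0 < Qop b d u m.
Proof.
  intros H1 H2. unfold Qop. rewrite sumR_shift, C_n_0, Nat.sub_0_r. simpl.
  assert (0 <= sumR m (fun i => Binomial.C m (S i) * (INR (b - 1 - d) * INR (b - 1 - d) ^ i) * u (m - S i)%nat)).
  { apply sumR_nonneg. intros i Hi. apply Rmult_le_pos; [apply Rmult_le_pos|apply H1; lia].
    apply C_nonneg. apply Rmult_le_pos; [apply pos_INR|apply pow_le, pos_INR]. }
  lra.
Qed.

Lemma vbound b d : (2 <= b)%nat -> (d < b)%nat -> forall j m, 0 < v b d j m <= INR b.
Proof.
  intros Hb Hd j. induction j.
  - apply (gen_bound b d _ (lead b d 0)); auto.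
    + intros; apply FR; auto.
    + intros m. cbn [lead]. pose proof (S1_bound b d m Hd). pose proof (INR_b_pos b Hb).
      assert (0 < INR b ^ m) by (apply pow_lt; lra). simpl. split; nra.
  - apply (gen_bound b d _ (lead b d (S j))); auto.
    + intros; apply FR; auto.
    + intros m. cbn [lead]. split.
      * apply Qop_pos; [intros t _; pose proof (IHj t)|apply IHj]; lra.
      * apply Rle_trans with (Qop b d (fun _ => INR b) m).
        -- apply Qop_mono. intros t _; apply IHj.
        -- rewrite Qop_const. pose proof (S1_Q_bound b d m Hd). pose proof (INR_b_pos b Hb). nra.
Qed.

Lemma v_const21 m : v 2 1 0 m = 2.
Proof.
  apply (gen_uniq 2 1 _ (fun _ => 2) (lead 2 1 0)); try lia.
  - intros; apply FR; lia.
  - intros k. rewrite Pop_const. unfold S1, lead. cbn [sumR]. simpl. ring.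
Qed.

Fixpoint kpad (b d r a : nat) : nat :=
  match r with O => O | S r' => ((if Nat.eqb (a mod b) d then 1 else 0) + kpad b d r' (a / b))%nat end.

Lemma kpad_top b d r t a : (2 <= b)%nat -> (t < b)%nat -> (a < b ^ r)%nat ->
  kpad b d (S r) (t * b ^ r + a) = ((if Nat.eqb t d then 1 else 0) + kpad b d r a)%nat.
Proof.
  intros Hb. revert a. induction r; intros a Ht Ha.
  - simpl in Ha. assert (a = 0%nat) by lia. subst. cbn [kpad].
    rewrite Nat.pow_0_r, !Nat.add_0_r, Nat.mul_1_r, Nat.mod_small by auto. reflexivity.
  - cbn [kpad]. cbn [kpad] in IHr.
    replace (t * b ^ S r + a)%nat with (a + (t * b ^ r) * b)%nat by (simpl; lia).
    rewrite Nat.Div0.mod_add, Nat.div_add by lia.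
    replace (a / b + t * b ^ r)%nat with (t * b ^ r + a / b)%nat by lia.
    rewrite IHr; auto.
    + lia.
    + simpl in Ha. apply Nat.Div0.div_lt_upper_bound. lia.
Qed.

Definition X b d r j m := sumR (b ^ r) (fun a => if Nat.eqb (kpad b d r a) j then (/ INR b) ^ r * (1 - INR a / INR b ^ r) ^ m else 0).
Definition vR b d R j m := sumR R (fun r => X b d r j m).

Lemma pointwise_y b r m t a : (2 <= b)%nat -> (t < b)%nat ->
  INR b ^ S m * ((/ INR b) ^ S r * (1 - INR (t * b ^ r + a) / INR b ^ S r) ^ m) =
  (/ INR b) ^ r * (INR (b - 1 - t) + (1 - INR a / INR b ^ r)) ^ m.
Proof.
  intros Hb Ht. pose proof (INR_b_pos b Hb).
  assert (HP : 0 < INR b ^ r) by (apply pow_lt; lra).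
  assert (E : INR (b - 1 - t) + (1 - INR a / INR b ^ r) = INR b * (1 - INR (t * b ^ r + a) / INR b ^ S r)).
  { rewrite plus_INR, mult_INR, pow_INR. rewrite !minus_INR by lia. simpl. field. lra. }
  rewrite E, Rpow_mult_distr. simpl. rewrite <- Rinv_pow by lra. field; lra.
Qed.

Lemma gammap_rev b d i : (d < b)%nat ->
  gammap b d i = sumR b (fun t => if Nat.eqb t d then 0 else INR (b - 1 - t) ^ i).
Proof.
  intros Hd. unfold gammap. rewrite sumR_rev. apply sumR_ext. intros t Ht.
  destruct (Nat.eqb_spec (b - 1 - t) (b - 1 - d)); destruct (Nat.eqb_spec t d); try lia; try reflexivity.
  all: try (f_equal; f_equal; lia).
Qed.

Definition Xprev b d r j m := match j with O => 0 | S j' => X b d r j' m end.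

Lemma X_core b d r j m : (2 <= b)%nat -> (d < b)%nat ->
  INR b ^ S m * X b d (S r) j m =
  sumR (S m) (fun i => Binomial.C m i * gammap b d i * X b d r j (m - i)%nat) +
  sumR (S m) (fun i => Binomial.C m i * INR (b - 1 - d) ^ i * Xprev b d r j (m - i)%nat).
Proof.
  intros Hb Hd.
  set (Z := fun t i => sumR (b ^ r) (fun a => if Nat.eqb ((if Nat.eqb t d then 1 else 0) + kpad b d r a)%nat j
             then (/ INR b) ^ r * (1 - INR a / INR b ^ r) ^ (m - i) else 0)).
  transitivity (sumR (S m) (fun i => Binomial.C m i * sumR b (fun t => INR (b - 1 - t) ^ i * Z t i))).
  - unfold X. rewrite <- sumR_scal. cbn [Nat.pow]. rewrite sumR_mul.
    transitivity (sumR b (fun t => sumR (S m) (fun i => Binomial.C m i * (INR (b - 1 - t) ^ i * Z t i)))).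
    + apply sumR_ext. intros t Ht. unfold Z.
      transitivity (sumR (b ^ r) (fun a => sumR (S m) (fun i => Binomial.C m i * (INR (b - 1 - t) ^ i *
         (if Nat.eqb ((if Nat.eqb t d then 1 else 0) + kpad b d r a)%nat j
             then (/ INR b) ^ r * (1 - INR a / INR b ^ r) ^ (m - i) else 0))))).
      * apply sumR_ext. intros a Ha. rewrite kpad_top by auto.
        destruct (Nat.eqb _ j).
        -- rewrite pointwise_y by auto. rewrite binom_sumR, <- sumR_scal. apply sumR_ext. intros; ring.
        -- rewrite (sumR_ext _ _ (fun _ => 0)) by (intros; ring). rewrite sumR_zero; ring.
      * rewrite sumR_swap. apply sumR_ext. intros i Hi. rewrite <- !sumR_scal. reflexivity.
    + rewrite sumR_swap. apply sumR_ext. intros i Hi. rewrite <- sumR_scal. reflexivity.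
  - rewrite <- sumR_plus. apply sumR_ext. intros i Hi. rewrite Rmult_assoc, Rmult_assoc, <- Rmult_plus_distr_l. f_equal.
    rewrite <- (sumR_drop b d (fun t => INR (b - 1 - t) ^ i * Z t i)) by auto.
    rewrite gammap_rev by auto. rewrite <- sumR_scalr. f_equal.
    + apply sumR_ext. intros t Ht. destruct (Nat.eqb_spec t d); [ring|]. f_equal. unfold Z, X.
      apply sumR_ext. intros a Ha. destruct (Nat.eqb_spec t d); [lia|]. reflexivity.
    + f_equal. unfold Z, Xprev. rewrite Nat.eqb_refl. destruct j.
      * rewrite (sumR_ext _ _ (fun _ => 0)). apply sumR_zero. intros; reflexivity.
      * unfold X. apply sumR_ext. intros a Ha. reflexivity.
Qed.

Definition vRprev b d R j := match j with O => fun _ : nat => 0 | S j' => vR b d R j' end.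

Lemma X_0 b d j m : X b d 0 j m = if Nat.eqb j 0 then 1 else 0.
Proof. unfold X. change (b^0)%nat with 1%nat. cbn [sumR kpad pow]. destruct j; simpl Nat.eqb; cbv iota. unfold Rdiv. rewrite Rmult_0_l, Rminus_0_r, pow1. ring. ring. Qed.

Lemma VR b d R j m : (2 <= b)%nat -> (d < b)%nat ->
  INR b ^ S m * vR b d (S R) j m = (if Nat.eqb j 0 then INR b ^ S m else 0) + Pop b d (vR b d R j) m + Qop b d (vRprev b d R j) m.
Proof.
  intros Hb Hd. unfold vR. rewrite sumR_shift, X_0, Rmult_plus_distr_l, <- sumR_scal.
  rewrite (sumR_ext _ _ (fun r => sumR (S m) (fun i => Binomial.C m i * gammap b d i * X b d r j (m - i)%nat) +
       sumR (S m) (fun i => Binomial.C m i * INR (b - 1 - d) ^ i * Xprev b d r j (m - i)%nat))).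
  2:{ intros; apply X_core; auto. }
  rewrite sumR_plus, Rplus_assoc. f_equal. { destruct (Nat.eqb j 0); ring. } f_equal.
  - unfold Pop. rewrite sumR_swap. apply sumR_ext. intros i _. rewrite <- sumR_scal. reflexivity.
  - unfold Qop, vRprev. rewrite sumR_swap. apply sumR_ext. intros i _.
    destruct j; unfold Xprev.
    + rewrite (sumR_ext _ _ (fun _ => 0)) by (intros; ring). rewrite sumR_zero; ring.
    + unfold vR. rewrite <- sumR_scal. reflexivity.
Qed.

Lemma Pop_ext b d u u' m : (forall t, u t = u' t) -> Pop b d u m = Pop b d u' m.
Proof. intros H. unfold Pop. apply sumR_ext. intros. rewrite H. reflexivity. Qed.
Lemma Qop_ext b d u u' m : (forall t, u t = u' t) -> Qop b d u m = Qop b d u' m.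
Proof. intros H. unfold Qop. apply sumR_ext. intros. rewrite H. reflexivity. Qed.
Lemma Pop_sub b d u u' m : Pop b d (fun t => u t - u' t) m = Pop b d u m - Pop b d u' m.
Proof. rewrite (Pop_ext b d _ (fun t => 1 * u t + (-1) * u' t)) by (intros; ring). rewrite Pop_lin. ring. Qed.
Lemma Qop_sub b d u u' m : Qop b d (fun t => u t - u' t) m = Qop b d u m - Qop b d u' m.
Proof. rewrite (Qop_ext b d _ (fun t => 1 * u t + (-1) * u' t)) by (intros; ring). rewrite Qop_lin. ring. Qed.
Lemma Qop_zero b d m : Qop b d (fun _ => 0) m = 0.
Proof. rewrite Qop_const. ring. Qed.
Lemma Pop_zero b d m : Pop b d (fun _ => 0) m = 0.
Proof. rewrite Pop_const. ring. Qed.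

Definition delta b d R j m := v b d j m - vR b d R j m.
Definition dprev b d R j := match j with O => fun _ : nat => 0 | S j' => delta b d R j' end.

Lemma delta_rec b d R j m : (2 <= b)%nat -> (d < b)%nat ->
  INR b ^ S m * delta b d (S R) j m = Pop b d (delta b d R j) m + Qop b d (dprev b d R j) m.
Proof.
  intros Hb Hd. unfold delta. rewrite Rmult_minus_distr_l, FR, VR by auto.
  unfold dprev, vRprev. rewrite (Pop_sub b d (v b d j) (vR b d R j)).
  destruct j; cbn [lead]; simpl Nat.eqb.
  - rewrite Qop_zero. ring.
  - rewrite (Qop_sub b d (v b d j) (vR b d R j)). ring.
Qed.

Fixpoint Eb (b N j : nat) : R :=
  match N with
  | O => INR b
  | S N' => match j with
            | O => (INR b - 1) / INR b * Eb b N' O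
            | S j' => ((INR b - 1) * Eb b N' (S j') + Eb b N' j') / INR b
            end
  end.

Lemma delta_bound b d : (2 <= b)%nat -> (d < b)%nat -> forall N j m, 0 <= delta b d N j m <= Eb b N j.
Proof.
  intros Hb Hd N. pose proof (INR_b_pos b Hb) as HB. induction N; intros j m.
  - unfold delta, vR. cbn [sumR Eb]. pose proof (vbound b d Hb Hd j m). lra.
  - assert (Hbm : 0 < INR b ^ m) by (apply pow_lt; lra).
    assert (Hbm1 : 0 < INR b ^ S m) by (apply pow_lt; lra).
    pose proof (delta_rec b d N j m Hb Hd) as Hr.
    assert (HP0 : 0 <= Pop b d (delta b d N j) m).
    { rewrite <- (Pop_zero b d m). apply Pop_mono. intros; apply IHN. }
    assert (HQ0 : 0 <= Qop b d (dprev b d N j) m).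
    { rewrite <- (Qop_zero b d m). apply Qop_mono. intros; destruct j; simpl; [lra|apply IHN]. }
    assert (HP1 : Pop b d (delta b d N j) m <= Eb b N j * ((INR b - 1) * INR b ^ m)).
    { apply Rle_trans with (Pop b d (fun _ => Eb b N j) m). apply Pop_mono; intros; apply IHN.
      rewrite Pop_const. apply Rmult_le_compat_l. pose proof (IHN j 0%nat); lra. apply S1_bound; auto. }
    assert (Hdp : (INR (b - 1 - d) + 1) ^ m <= INR b ^ m).
    { apply pow_incr. split. pose proof (pos_INR (b-1-d)); lra. rewrite <- S_INR. apply le_INR; lia. }
    split.
    + apply Rmult_le_reg_l with (INR b ^ S m); auto. rewrite Hr. lra.
    + apply Rmult_le_reg_l with (INR b ^ S m); auto. rewrite Hr. destruct j; cbn [Eb dprev].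
      * rewrite Qop_zero. simpl. apply Rle_trans with (Eb b N 0 * ((INR b - 1) * INR b ^ m)); [lra|].
        right. field. lra.
      * assert (HQ1 : Qop b d (delta b d N j) m <= Eb b N j * INR b ^ m).
        { apply Rle_trans with (Qop b d (fun _ => Eb b N j) m). apply Qop_mono; intros; apply IHN.
          rewrite Qop_const. apply Rmult_le_compat_l. pose proof (IHN j 0%nat); lra. auto. }
        cbn [dprev] in HQ1. simpl.
        apply Rle_trans with (Eb b N (S j) * ((INR b - 1) * INR b ^ m) + Eb b N j * INR b ^ m); [lra|].
        right. field. lra.
Qed.

Lemma lim0_mulr (u : nat -> R) a : is_lim_seq u 0 -> is_lim_seq (fun n => u n * a) 0.
Proof. intros H. apply (is_lim_seq_scal_r _ a) in H. simpl in H. rewrite Rmult_0_l in H. exact H. Qed.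

Lemma recur_zero (x f : nat -> R) q : 0 <= q < 1 -> (forall n, 0 <= x n) ->
  (forall n, x (S n) = q * x n + f n) -> is_lim_seq f 0 -> is_lim_seq x 0.
Proof.
  intros Hq Hx Hrec Hf. apply is_lim_seq_spec. intros eps.
  apply is_lim_seq_spec in Hf.
  assert (He : 0 < eps * (1 - q) / 2) by (pose proof (cond_pos eps); apply Rdiv_lt_0_compat; nra).
  destruct (Hf (mkposreal _ He)) as [N HN]. simpl in HN.
  assert (Hk : forall k, x (N + k)%nat <= q ^ k * x N + eps / 2).
  { induction k. - simpl. rewrite Nat.add_0_r. pose proof (cond_pos eps). lra.
    - rewrite Nat.add_succ_r, Hrec. specialize (HN (N + k)%nat ltac:(lia)).
      rewrite Rminus_0_r in HN. apply Rabs_def2 in HN. simpl.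
      assert (q * x (N + k)%nat <= q * (q ^ k * x N + eps / 2)) by (apply Rmult_le_compat_l; lra).
      lra. }
  assert (Hg : is_lim_seq (fun k => q ^ k * x N) 0).
  { apply lim0_mulr. apply is_lim_seq_geom. rewrite Rabs_right; lra. }
  apply is_lim_seq_spec in Hg. assert (He2 : 0 < eps / 2) by (pose proof (cond_pos eps); lra).
  destruct (Hg (mkposreal _ He2)) as [K HK]. simpl in HK.
  exists (N + K)%nat. intros n Hn. replace n with (N + (n - N))%nat by lia.
  specialize (HK (n - N)%nat ltac:(lia)). specialize (Hk (n - N)%nat).
  rewrite Rminus_0_r in *. apply Rabs_def2 in HK. pose proof (Hx (N + (n - N))%nat).
  rewrite Rabs_right by lra. lra.
Qed.

Lemma Eb_nonneg b R j : (2 <= b)%nat -> 0 <= Eb b R j.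
Proof.
  intros Hb. pose proof (INR_b_pos b Hb). revert j. induction R; intros j; simpl.
  - lra.
  - destruct j. + apply Rmult_le_pos; [apply Rdiv_le_0_compat|apply IHR]; lra.
    + apply Rdiv_le_0_compat; [|lra]. pose proof (IHR (S j)); pose proof (IHR j); nra.
Qed.

Lemma Eb_lim b j : (2 <= b)%nat -> is_lim_seq (fun R => Eb b R j) 0.
Proof.
  intros Hb. pose proof (INR_b_pos b Hb). induction j.
  - apply (recur_zero _ (fun _ => 0) ((INR b - 1) / INR b)).
    + split. apply Rdiv_le_0_compat; lra. apply Rmult_lt_reg_r with (INR b); [lra|].
      unfold Rdiv. rewrite Rmult_assoc, Rinv_l; lra.
    + intros; apply Eb_nonneg; auto.
    + intros n. simpl. ring.
    + apply is_lim_seq_const.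
  - apply (recur_zero _ (fun R => Eb b R j / INR b) ((INR b - 1) / INR b)).
    + split. apply Rdiv_le_0_compat; lra. apply Rmult_lt_reg_r with (INR b); [lra|].
      unfold Rdiv. rewrite Rmult_assoc, Rinv_l; lra.
    + intros; apply Eb_nonneg; auto.
    + intros n. simpl. field. lra.
    + apply lim0_mulr. auto.
Qed.

Lemma vR_lim b d j m : (2 <= b)%nat -> (d < b)%nat -> is_lim_seq (fun N => vR b d N j m) (v b d j m).
Proof.
  intros Hb Hd.
  assert (H0 : is_lim_seq (fun N => delta b d N j m) 0).
  { apply is_lim_seq_le_le with (fun _ => 0) (fun N => Eb b N j).
    - intros N; apply delta_bound; auto.
    - apply is_lim_seq_const.
    - apply Eb_lim; auto. }
  replace (v b d j m) with (v b d j m - 0) by ring.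
  apply (is_lim_seq_ext (fun N => v b d j m - delta b d N j m)).
  - intros N; unfold delta; ring.
  - apply is_lim_seq_minus'; auto. apply is_lim_seq_const.
Qed.

Fixpoint repd (b d j : nat) : nat := match j with O => O | S j' => (d + b * repd b d j')%nat end.

Lemma repd_bound b d j : (d < b)%nat -> (repd b d j < b ^ j)%nat.
Proof. intros Hd. induction j; simpl; [lia|]. nia. Qed.

Lemma kpad_repd b d j : (2 <= b)%nat -> (d < b)%nat -> kpad b d j (repd b d j) = j.
Proof.
  intros Hb Hd. induction j; [reflexivity|]. cbn [repd kpad].
  replace (d + b * repd b d j)%nat with (d + repd b d j * b)%nat by lia.
  rewrite Nat.Div0.mod_add, Nat.div_add, Nat.mod_small, Nat.div_small, Nat.eqb_refl by lia.
  simpl. rewrite IHj. reflexivity.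
Qed.

Lemma kpad_zero0 b j : (2 <= b)%nat -> kpad b 0 j 0 = j.
Proof. intros Hb. induction j; [reflexivity|]. cbn [kpad]. rewrite Nat.Div0.mod_0_l, Nat.Div0.div_0_l. simpl. lia. Qed.

Lemma witness b d j : (2 <= b)%nat -> (d < b)%nat -> ~ (b = 2%nat /\ d = 1%nat /\ j = 0%nat) ->
  exists r a, (a < b ^ r)%nat /\ (1 <= a)%nat /\ kpad b d r a = j.
Proof.
  intros Hb Hd Hn. destruct j.
  - destruct (Nat.eq_dec d 1).
    + exists 1%nat, 2%nat. assert (3 <= b)%nat by lia. simpl. rewrite Nat.mod_small by lia.
      repeat split; try lia. destruct (Nat.eqb_spec 2 d); lia.
    + exists 1%nat, 1%nat. simpl. rewrite Nat.mod_small by lia.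
      repeat split; try lia. destruct (Nat.eqb_spec 1 d); lia.
  - destruct d.
    + exists (S (S j)), 1%nat. repeat split.
      * simpl. pose proof (Nat.pow_lower_bound b j). nia.
      * lia.
      * cbn [kpad]. rewrite Nat.mod_small, Nat.div_small by lia. simpl. rewrite Nat.Div0.div_0_l, kpad_zero0, Nat.Div0.mod_0_l by auto. simpl. lia.
    + exists (S j). exists (repd b (S d) (S j)). repeat split.
      * apply repd_bound; auto.
      * simpl. lia.
      * apply kpad_repd; auto.
Qed.

Lemma X_diff b d r j m : X b d r j m - X b d r j (S m) =
  sumR (b ^ r) (fun a => if Nat.eqb (kpad b d r a) j then (/ INR b) ^ r * ((1 - INR a / INR b ^ r) ^ m * (INR a / INR b ^ r)) else 0).
Proof. unfold X. rewrite <- sumR_minus. apply sumR_ext. intros a _. destruct (Nat.eqb _ _); simpl; ring. Qed.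

Lemma y_range b r a : (2 <= b)%nat -> (a <= b ^ r)%nat -> 0 <= INR a / INR b ^ r <= 1.
Proof.
  intros Hb Ha. pose proof (INR_b_pos b Hb). assert (0 < INR b ^ r) by (apply pow_lt; lra).
  split. apply Rdiv_le_0_compat; [apply pos_INR|lra].
  apply Rmult_le_reg_r with (INR b ^ r); auto. unfold Rdiv. rewrite Rmult_assoc, Rinv_l by lra.
  rewrite <- pow_INR. rewrite Rmult_1_r, Rmult_1_l. apply le_INR. auto.
Qed.

Lemma X_diff_nonneg b d r j m : (2 <= b)%nat -> 0 <= X b d r j m - X b d r j (S m).
Proof.
  intros Hb. rewrite X_diff. apply sumR_nonneg. intros a Ha. destruct (Nat.eqb _ _); [|lra].
  pose proof (y_range b r a Hb ltac:(lia)). pose proof (INR_b_pos b Hb).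
  apply Rmult_le_pos. apply pow_le. apply Rlt_le, Rinv_0_lt_compat; lra.
  apply Rmult_le_pos; [apply pow_le|]; lra.
Qed.

Lemma v_decr_m b d j m : (2 <= b)%nat -> (d < b)%nat -> ~ (b = 2%nat /\ d = 1%nat /\ j = 0%nat) ->
  v b d j (S m) < v b d j m.
Proof.
  intros Hb Hd Hn. destruct (witness b d j Hb Hd Hn) as (r & a & Ha & Ha1 & Hk).
  pose proof (INR_b_pos b Hb).
  set (y := INR a / INR b ^ r).
  assert (Hy : 0 < y < 1).
  { pose proof (pow_lt (INR b) r ltac:(lra)). unfold y. split.
    - apply Rdiv_lt_0_compat; auto. apply (lt_INR 0); lia.
    - apply Rmult_lt_reg_r with (INR b ^ r); auto. unfold Rdiv. rewrite Rmult_assoc, Rinv_l by lra.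
      rewrite <- pow_INR. rewrite Rmult_1_r, Rmult_1_l. apply lt_INR. auto. }
  set (c := (/ INR b) ^ r * ((1 - y) ^ m * y)).
  assert (Hc : 0 < c).
  { unfold c. apply Rmult_lt_0_compat. apply pow_lt, Rinv_0_lt_compat; lra.
    apply Rmult_lt_0_compat; [apply pow_lt|]; lra. }
  assert (Hle : Rbar_le c (v b d j m - v b d j (S m))).
  { apply is_lim_seq_le_loc with (fun _ => c) (fun N => vR b d N j m - vR b d N j (S m)).
    - exists (S r). intros N HN. unfold vR. rewrite <- sumR_minus.
      apply Rle_trans with (X b d r j m - X b d r j (S m)).
      + rewrite X_diff. unfold c, y.
        eapply Rle_trans; [|apply (sumR_ge_term _ (fun a0 => if Nat.eqb (kpad b d r a0) j then (/ INR b) ^ r * ((1 - INR a0 / INR b ^ r) ^ m * (INR a0 / INR b ^ r)) else 0) a)].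
        * rewrite Hk, Nat.eqb_refl. lra.
        * intros a0 Ha0. destruct (Nat.eqb _ _); [|lra].
          pose proof (y_range b r a0 Hb ltac:(lia)).
          apply Rmult_le_pos. apply pow_le. apply Rlt_le, Rinv_0_lt_compat; lra.
          apply Rmult_le_pos; [apply pow_le|]; lra.
        * auto.
      + apply (sumR_ge_term _ (fun r0 => X b d r0 j m - X b d r0 j (S m))); [|lia].
        intros; apply X_diff_nonneg; auto.
    - apply is_lim_seq_const.
    - apply is_lim_seq_minus'; apply vR_lim; auto. }
  simpl in Hle. lra.
Qed.

Definition Qrest b d (u : nat -> R) m := sumR m (fun i => Binomial.C m (S i) * INR (b - 1 - d) ^ (S i) * u (m - S i)%nat).

Lemma Qop_split b d u m : Qop b d u m = u m + Qrest b d u m.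
Proof. unfold Qop, Qrest. rewrite sumR_shift, C_n_0, Nat.sub_0_r. simpl pow. ring. Qed.

Lemma Qrest_le b d u c m : (forall t, (t < m)%nat -> u t <= c) -> Qrest b d u m <= c * ((INR (b - 1 - d) + 1) ^ m - 1).
Proof.
  intros H. assert (E := Qop_split b d (fun _ => c) m). rewrite Qop_const in E.
  apply Rle_trans with (Qrest b d (fun _ => c) m); [|lra].
  apply sumR_le. intros i Hi. apply Rmult_le_compat_l; [|apply H; lia].
  apply Rmult_le_pos; [apply C_nonneg|apply pow_le, pos_INR].
Qed.

Lemma pow_lt_strict x y m : 0 <= x < y -> (1 <= m)%nat -> x ^ m < y ^ m.
Proof.
  intros H Hm. destruct m; [lia|]. simpl. pose proof (pow_incr x y m ltac:(lra)).
  assert (0 < y ^ m) by (apply pow_lt; lra). nra.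
Qed.

Lemma lead0_gap b d m : (2 <= b)%nat -> (d < b)%nat -> (1 <= m)%nat -> Qop b d (v b d 0) m < INR b ^ S m.
Proof.
  intros Hb Hd Hm. pose proof (INR_b_pos b Hb). rewrite Qop_split.
  assert (HQ := Qrest_le b d (v b d 0) (INR b) m ltac:(intros; apply vbound; auto)).
  assert (Hv := vbound b d Hb Hd 0 m).
  destruct d.
  - assert (Hlt : v b 0 0 m < INR b).
    { destruct m; [lia|]. eapply Rlt_le_trans. apply v_decr_m; auto. intros (_ & ? & _); lia. apply vbound; auto. }
    assert (E : INR (b - 1 - 0) + 1 = INR b).
    { replace (b - 1 - 0)%nat with (b - 1)%nat by lia. rewrite minus_INR by lia. simpl. lra. }
    rewrite E in HQ.
    change (INR b ^ S m) with (INR b * INR b ^ m). nra.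
  - assert (Hp : (INR (b - 1 - S d) + 1) ^ m < INR b ^ m).
    { apply pow_lt_strict; auto. split. pose proof (pos_INR (b - 1 - S d)); lra.
      rewrite <- S_INR. apply lt_INR. lia. }
    change (INR b ^ S m) with (INR b * INR b ^ m). nra.
Qed.

Lemma v_decr_j b d j m : (2 <= b)%nat -> (d < b)%nat -> (1 <= m)%nat -> v b d (S j) m < v b d j m.
Proof.
  intros Hb Hd. revert m. induction j; intros m Hm.
  - assert (0 < v b d 0 m - v b d 1 m); [|lra].
    apply (gen_pos b d (fun t => v b d 0 t - v b d 1 t) (fun t => lead b d 0 t - lead b d 1 t)); auto.
    + intros k. rewrite Pop_sub, Rmult_minus_distr_l, !FR by auto. ring.
    + rewrite !v_j0 by auto. ring.
    + intros k Hk. cbn [lead]. pose proof (lead0_gap b d k Hb Hd Hk). lra.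
  - assert (0 < v b d (S j) m - v b d (S (S j)) m); [|lra].
    apply (gen_pos b d (fun t => v b d (S j) t - v b d (S (S j)) t) (fun t => lead b d (S j) t - lead b d (S (S j)) t)); auto.
    + intros k. rewrite Pop_sub, Rmult_minus_distr_l, !FR by auto. ring.
    + rewrite !v_j0 by auto. ring.
    + intros k Hk. cbn [lead]. rewrite <- Qop_sub. apply Qop_pos.
      * intros t _. destruct t. rewrite !v_j0 by auto. lra. pose proof (IHj (S t) ltac:(lia)). lra.
      * pose proof (IHj k Hk). lra.
Qed.

Lemma is_lim_seq_sumR n (f : nat -> nat -> R) (l : nat -> R) :
  (forall i, (i < n)%nat -> is_lim_seq (fun j => f j i) (l i)) ->
  is_lim_seq (fun j => sumR n (f j)) (sumR n l).
Proof.
  induction n; intros H; cbn [sumR].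
  - apply is_lim_seq_const.
  - apply is_lim_seq_plus'; auto.
Qed.

Definition ell b d m := real (Lim_seq (fun j => v b d j m)).

Lemma ell_lim b d m : (2 <= b)%nat -> (d < b)%nat -> is_lim_seq (fun j => v b d j m) (ell b d m).
Proof.
  intros Hb Hd.
  assert (Hex : ex_finite_lim_seq (fun j => v b d j m)).
  { apply ex_finite_lim_seq_decr with 0.
    - intros j. destruct m. rewrite !v_j0 by auto. lra. apply Rlt_le, v_decr_j; auto; lia.
    - intros j. pose proof (vbound b d Hb Hd j m). lra. }
  destruct Hex as [l Hl]. unfold ell. rewrite (is_lim_seq_unique _ _ Hl). exact Hl.
Qed.

Lemma ell_rec b d m : (2 <= b)%nat -> (d < b)%nat ->
  INR b ^ S m * ell b d m = Qop b d (ell b d) m + Pop b d (ell b d) m.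
Proof.
  intros Hb Hd.
  assert (H1 : is_lim_seq (fun j => INR b ^ S m * v b d (S j) m) (INR b ^ S m * ell b d m)).
  { apply is_lim_seq_mult'. apply is_lim_seq_const. apply (is_lim_seq_incr_1 (fun j => v b d j m)). apply ell_lim; auto. }
  assert (H2 : is_lim_seq (fun j => INR b ^ S m * v b d (S j) m) (Qop b d (ell b d) m + Pop b d (ell b d) m)).
  { apply (is_lim_seq_ext (fun j => Qop b d (v b d j) m + Pop b d (v b d (S j)) m)).
    - intros j. rewrite FR by auto. reflexivity.
    - apply is_lim_seq_plus'.
      + unfold Qop. apply is_lim_seq_sumR. intros i _. apply is_lim_seq_mult'. apply is_lim_seq_const. apply ell_lim; auto.
      + unfold Pop. apply is_lim_seq_sumR. intros i _. apply is_lim_seq_mult'. apply is_lim_seq_const.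
        apply (is_lim_seq_incr_1 (fun j => v b d j (m - i)%nat)). apply ell_lim; auto. }
  apply is_lim_seq_unique in H1. apply is_lim_seq_unique in H2. rewrite H1 in H2. injection H2. auto.
Qed.

Lemma C_n_n n : Binomial.C n n = 1.
Proof. unfold Binomial.C. rewrite Nat.sub_diag. simpl. field. apply INR_fact_neq_0. Qed.

Lemma sumR_S n f : sumR (S n) f = sumR n f + f n.
Proof. reflexivity. Qed.

Lemma binom_int x m : sumR (S m) (fun i => Binomial.C m i * x ^ i / (INR (m - i) + 1)) =
  ((x + 1) ^ S m - x ^ S m) / (INR m + 1).
Proof.
  transitivity (sumR (S m) (fun i => Binomial.C (S m) i * x ^ i * 1 ^ (S m - i)) / (INR m + 1)).
  - unfold Rdiv. rewrite <- sumR_scalr. apply sumR_ext. intros i Hi. rewrite pow1. rewrite pascal_step2 by lia.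
    replace (S m - i)%nat with (S (m - i)) by lia. rewrite !S_INR. field.
    split; pose proof (pos_INR m); pose proof (pos_INR (m - i)); lra.
  - f_equal. rewrite binom_sumR. rewrite (sumR_S (S m)). rewrite C_n_n, Nat.sub_diag. simpl pow at 3. ring.
Qed.

Lemma telescope n (f : nat -> R) : sumR n (fun a => f (S a) - f a) = f n - f 0%nat.
Proof. induction n; cbn [sumR]; [ring|]. rewrite IHn. ring. Qed.

Lemma limit_identity b d m : (2 <= b)%nat -> (d < b)%nat ->
  INR b ^ S m * (INR b / (INR m + 1)) = Qop b d (fun t => INR b / (INR t + 1)) m + Pop b d (fun t => INR b / (INR t + 1)) m.
Proof.
  intros Hb Hd. unfold Qop, Pop. rewrite <- sumR_plus.
  transitivity (sumR (S m) (fun i => sumR b (fun a => INR b * (Binomial.C m i * INR a ^ i / (INR (m - i) + 1))))).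
  2:{ apply sumR_ext. intros i _. pose proof (pos_INR (m - i)).
      rewrite (sumR_ext b _ (fun a => (INR b * Binomial.C m i / (INR (m - i) + 1)) * INR a ^ i)) by (intros; field; lra).
      rewrite sumR_scal. rewrite <- (sumR_drop b (b - 1 - d) (fun a => INR a ^ i)) by lia.
      unfold gammap. field. lra. }
  rewrite sumR_swap.
  rewrite (sumR_ext b _ (fun a => INR b * (((INR a + 1) ^ S m - INR a ^ S m) / (INR m + 1)))).
  2:{ intros a _. rewrite sumR_scal, <- binom_int. f_equal. }
  rewrite sumR_scal. unfold Rdiv. rewrite sumR_scalr.
  rewrite (sumR_ext b _ (fun a => INR (S a) ^ S m - INR a ^ S m)) by (intros; rewrite S_INR; reflexivity).
  rewrite (telescope b (fun a => INR a ^ S m)). simpl. field. pose proof (pos_INR m); lra.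
Qed.

Lemma ell_value b d m : (2 <= b)%nat -> (d < b)%nat -> ell b d m = INR b / (INR m + 1).
Proof.
  intros Hb Hd. induction m as [m IH] using (well_founded_induction lt_wf).
  set (g := fun t => ell b d t - INR b / (INR t + 1)).
  assert (Hg : INR b ^ S m * g m = Qop b d g m + Pop b d g m).
  { unfold g. rewrite Qop_sub, Pop_sub, Rmult_minus_distr_l, (ell_rec b d m), (limit_identity b d m) by auto. ring. }
  destruct m.
  - assert (Hl := ell_lim b 0 0 Hb). unfold ell. 
    rewrite (is_lim_seq_unique (fun j => v b d j 0) (INR b)). simpl. field.
    apply (is_lim_seq_ext (fun _ => INR b)). intros; rewrite v_j0; auto. apply is_lim_seq_const.
  - rewrite Qop_split, Pop_split in Hg by auto.
    assert (H0 : forall t, (t < S m)%nat -> g t = 0) by (intros t Ht; unfold g; rewrite IH by auto; ring).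
    assert (HQ : Qrest b d g (S m) = 0).
    { unfold Qrest. rewrite (sumR_ext _ _ (fun _ => 0)). apply sumR_zero. intros i Hi. rewrite H0 by lia. ring. }
    assert (HP : sumR (S m) (fun i' => Binomial.C (S m) (S i') * gammap b d (S i') * g (S m - S i')%nat) = 0).
    { rewrite (sumR_ext _ _ (fun _ => 0)). apply sumR_zero. intros i Hi. rewrite H0 by lia. ring. }
    rewrite HQ, HP in Hg.
    assert (Hbig : INR b < INR b ^ S (S m)).
    { pose proof (INR_b_pos b Hb). rewrite <- (pow_1 (INR b)) at 1. apply Rlt_pow; [lra|lia]. }
    assert (g (S m) = 0) by nra. unfold g in H. lra.
Qed.

Lemma digits_fuel b : (2 <= b)%nat -> forall f f' n, (n <= f)%nat -> (n <= f')%nat -> digits_aux b f n = digits_aux b f' n.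
Proof.
  intros Hb. induction f; intros f' n H1 H2.
  - assert (n = 0%nat) by lia. subst. destruct f'; reflexivity.
  - destruct f'. + assert (n = 0%nat) by lia. subst. reflexivity.
    + cbn [digits_aux]. destruct (Nat.eqb_spec n 0); [reflexivity|].
      f_equal. apply IHf.
      * assert (n / b < n)%nat by (apply Nat.div_lt; lia). lia.
      * assert (n / b < n)%nat by (apply Nat.div_lt; lia). lia.
Qed.

Lemma kcount_pos b d n : (2 <= b)%nat -> (0 < n)%nat ->
  kcount b d n = ((if Nat.eqb (n mod b) d then 1 else 0) + kcount b d (n / b))%nat.
Proof.
  intros Hb Hn. unfold kcount, digits. destruct n as [|n']; [lia|].
  cbn [digits_aux]. simpl Nat.eqb. cbv iota.
  rewrite (digits_fuel b Hb n' (S n' / b) (S n' / b)).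
  2:{ assert (S n' / b < S n')%nat by (apply Nat.div_lt; lia). lia. }
  2: lia.
  simpl count_occ. destruct (Nat.eq_dec (S n' mod b) d); destruct (Nat.eqb_spec (S n' mod b) d); try lia; reflexivity.
Qed.

Lemma kcount_split b d n r a : (2 <= b)%nat -> (1 <= n)%nat -> (a < b ^ r)%nat ->
  kcount b d (n * b ^ r + a) = (kcount b d n + kpad b d r a)%nat.
Proof.
  intros Hb Hn. revert a. induction r; intros a Ha.
  - simpl in Ha. assert (a = 0%nat) by lia. subst. simpl. rewrite Nat.mul_1_r, !Nat.add_0_r. reflexivity.
  - rewrite kcount_pos by (pose proof (Nat.pow_lower_bound b (S r)); nia).
    replace (n * b ^ S r + a)%nat with (a + (n * b ^ r) * b)%nat by (simpl; lia).
    rewrite Nat.Div0.mod_add, Nat.div_add by lia.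
    replace (a / b + n * b ^ r)%nat with (n * b ^ r + a / b)%nat by lia.
    rewrite IHr. cbn [kpad]. lia.
    simpl in Ha. apply Nat.Div0.div_lt_upper_bound. lia.
Qed.

Lemma atom_series b r a x : (2 <= b)%nat -> (a < b ^ r)%nat -> 1 <= x ->
  is_series (fun m => (/ INR b) ^ r * (1 - INR a / INR b ^ r) ^ m / (x + 1) ^ S m) (/ (x * INR b ^ r + INR a)).
Proof.
  intros Hb Ha Hx. pose proof (y_range b r a Hb ltac:(lia)) as Hy.
  pose proof (INR_b_pos b Hb). assert (HP : 0 < INR b ^ r) by (apply pow_lt; lra).
  set (y := INR a / INR b ^ r) in *.
  assert (Hq : Rabs ((1 - y) / (x + 1)) < 1).
  { rewrite Rabs_right. apply Rmult_lt_reg_r with (x + 1); [lra|]. unfold Rdiv. rewrite Rmult_assoc, Rinv_l; lra.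
    apply Rle_ge, Rdiv_le_0_compat; lra. }
  apply (is_series_ext (fun m => ((1 - y) / (x + 1)) ^ m * ((/ INR b) ^ r / (x + 1)))).
  - intros m. simpl. unfold Rdiv. rewrite Rpow_mult_distr, <- (Rinv_pow (x + 1) m) by lra.
    field. split; [apply pow_nonzero|]; lra.
  - replace (/ (x * INR b ^ r + INR a)) with (/ (1 - (1 - y) / (x + 1)) * ((/ INR b) ^ r / (x + 1))).
    + apply is_series_scal_r. apply is_series_geom; auto.
    + unfold y. rewrite <- Rinv_pow by lra. field. split; [|lra].
      pose proof (pos_INR a); nra.
Qed.

Lemma is_series_Rplus (a b : nat -> R) la lb : is_series a la -> is_series b lb -> is_series (fun n => a n + b n) (la + lb).
Proof. intros Ha Hb. exact (is_series_plus a b la lb Ha Hb). Qed.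

Lemma is_series_0 : is_series (fun _ => 0) 0.
Proof.
  assert (H := is_series_scal_r 0 _ _ (is_series_geom 0 ltac:(rewrite Rabs_R0; lra))).
  rewrite Rmult_0_r in H. revert H. apply is_series_ext. intros; apply Rmult_0_r.
Qed.

Lemma is_series_sumR n (f : nat -> nat -> R) (s : nat -> R) :
  (forall i, (i < n)%nat -> is_series (f i) (s i)) ->
  is_series (fun m => sumR n (fun i => f i m)) (sumR n s).
Proof.
  induction n; intros H; cbn [sumR].
  - apply is_series_0.
  - apply (is_series_Rplus (fun m => sumR n (fun i => f i m)) (f n)); auto.
Qed.

Lemma is_series_if (P : bool) (f : nat -> R) s : is_series f s -> is_series (fun m => if P then f m else 0) (if P then s else 0).
Proof.
  intros H. destruct P; auto. apply is_series_0.
Qed.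

Definition Tsum b d N j x := sumR N (fun r => sumR (b ^ r) (fun a => if Nat.eqb (kpad b d r a) j then / (x * INR b ^ r + INR a) else 0)).

Lemma T_series b d N j x : (2 <= b)%nat -> 1 <= x ->
  is_series (fun m => vR b d N j m / (x + 1) ^ S m) (Tsum b d N j x).
Proof.
  intros Hb Hx. unfold vR, Tsum, X.
  apply (is_series_ext (fun m => sumR N (fun r => sumR (b ^ r) (fun a => if Nat.eqb (kpad b d r a) j then (/ INR b) ^ r * (1 - INR a / INR b ^ r) ^ m / (x + 1) ^ S m else 0)))).
  - intros m. unfold Rdiv. rewrite <- sumR_scalr. apply sumR_ext. intros r _. rewrite <- sumR_scalr.
    apply sumR_ext. intros a _. destruct (Nat.eqb _ _); ring.
  - apply is_series_sumR. intros r _. apply is_series_sumR. intros a Ha.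
    apply is_series_if. apply atom_series; auto.
Qed.

Lemma geom_tail c x : 0 < x -> is_series (fun m => c / (x + 1) ^ S m) (c / x).
Proof.
  intros Hx.
  assert (Hq : Rabs (/ (x + 1)) < 1).
  { rewrite Rabs_right. apply Rmult_lt_reg_r with (x + 1); [lra|]. rewrite Rinv_l; lra.
    apply Rle_ge, Rlt_le, Rinv_0_lt_compat; lra. }
  assert (H := is_series_scal_r (c / (x + 1)) _ _ (is_series_geom _ Hq)).
  replace (c / x) with (/ (1 - / (x + 1)) * (c / (x + 1))) by (field; lra).
  revert H. apply is_series_ext. intros m. simpl. rewrite <- Rinv_pow by lra. field. split; [apply pow_nonzero|]; lra.
Qed.

Definition Vser b d j x := fun m => v b d j m / (x + 1) ^ S m.
Definition Dser b d N j x := fun m => delta b d N j m / (x + 1) ^ S m.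
Definition Phi b d j x := Series (Vser b d j x).

Lemma Dser_props b d N j x : (2 <= b)%nat -> (d < b)%nat -> 1 <= x ->
  ex_series (Dser b d N j x) /\ 0 <= Series (Dser b d N j x) <= Eb b N j / x.
Proof.
  intros Hb Hd Hx.
  assert (Hb0 : forall m, 0 <= Dser b d N j x m <= Eb b N j / (x + 1) ^ S m).
  { intros m. unfold Dser. pose proof (delta_bound b d Hb Hd N j m). assert (0 < (x + 1) ^ S m) by (apply pow_lt; lra).
    split. apply Rdiv_le_0_compat; lra. unfold Rdiv. apply Rmult_le_compat_r; [apply Rlt_le, Rinv_0_lt_compat|]; lra. }
  assert (HG := geom_tail (Eb b N j) x ltac:(lra)).
  assert (Hex : ex_series (Dser b d N j x)).
  { apply (@ex_series_le R_AbsRing R_CompleteNormedModule) with (fun m => Eb b N j / (x + 1) ^ S m). intros m. change (norm (Dser b d N j x m)) with (Rabs (Dser b d N j x m)).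
    rewrite Rabs_right by (apply Rle_ge; apply Hb0). apply Hb0. exists (Eb b N j / x). auto. }
  split; auto. split.
  - rewrite <- (is_series_unique _ _ is_series_0). apply Series_le; auto. intros; split; [lra|apply Hb0].
  - rewrite <- (is_series_unique _ _ HG). apply Series_le; auto. exists (Eb b N j / x). auto.
Qed.

Lemma Phi_split b d N j x : (2 <= b)%nat -> (d < b)%nat -> 1 <= x ->
  is_series (Vser b d j x) (Tsum b d N j x + Series (Dser b d N j x)).
Proof.
  intros Hb Hd Hx. destruct (Dser_props b d N j x Hb Hd Hx) as [Hex _].
  assert (E : forall m, vR b d N j m / (x + 1) ^ S m + Dser b d N j x m = Vser b d j x m).
  { intros m. unfold Dser, Vser, delta. field. apply pow_nonzero. lra. }
  apply (is_series_ext (fun m => vR b d N j m / (x + 1) ^ S m + Dser b d N j x m)).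
  - exact E.
  - apply is_series_Rplus. apply T_series; auto. apply Series_correct; auto.
Qed.

Lemma Phi_correct b d j x : (2 <= b)%nat -> (d < b)%nat -> 1 <= x -> is_series (Vser b d j x) (Phi b d j x).
Proof.
  intros. unfold Phi. assert (H2 := Phi_split b d 0 j x H H0 H1).
  rewrite (is_series_unique _ _ H2). auto.
Qed.

Lemma Tsum_lim b d j x : (2 <= b)%nat -> (d < b)%nat -> 1 <= x ->
  is_lim_seq (fun N => Tsum b d N j x) (Phi b d j x).
Proof.
  intros Hb Hd Hx.
  assert (HE : forall N, Tsum b d N j x = Phi b d j x - Series (Dser b d N j x)).
  { intros N. unfold Phi. rewrite (is_series_unique _ _ (Phi_split b d N j x Hb Hd Hx)). ring. }
  apply (is_lim_seq_ext (fun N => Phi b d j x - Series (Dser b d N j x))). intros; rewrite HE; reflexivity.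
  assert (H0 : is_lim_seq (fun N => Series (Dser b d N j x)) 0).
  { apply is_lim_seq_le_le with (fun _ => 0) (fun N => Eb b N j / x).
    - intros N. apply Dser_props; auto.
    - apply is_lim_seq_const.
    - apply lim0_mulr. apply Eb_lim; auto. }
  pose proof (is_lim_seq_minus' _ _ _ _ (is_lim_seq_const (Phi b d j x)) H0) as H1.
  rewrite Rminus_0_r in H1. exact H1.
Qed.

Lemma sumR_split_at M K f : (K <= M)%nat -> sumR M f = sumR K f + sumR M (fun x => if Nat.leb K x then f x else 0).
Proof.
  induction M; intros H.
  - assert (K = 0%nat) by lia. subst. simpl. lra.
  - destruct (Nat.eq_dec K (S M)) as [->|HK].
    + rewrite (sumR_ext (S M) (fun x => if Nat.leb (S M) x then f x else 0) (fun _ => 0)).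
      rewrite sumR_zero; lra. intros i Hi. destruct (Nat.leb_spec (S M) i); [lia|reflexivity].
    + cbn [sumR]. rewrite IHM by lia. destruct (Nat.leb_spec K M); [|lia]. lra.
Qed.

Lemma sumR_len_mono p q a : (forall n, 0 <= a n) -> (p <= q)%nat -> sumR p a <= sumR q a.
Proof.
  intros Ha H. induction H; [lra|]. cbn [sumR]. pose proof (Ha m). lra.
Qed.

Lemma series_from_subseq (a : nat -> R) (g : nat -> nat) (L : R) :
  (forall n, 0 <= a n) -> (forall R, (g R <= g (S R))%nat) -> (forall R, (R <= g R)%nat) ->
  is_lim_seq (fun R => sumR (g R) a) L -> is_series a L.
Proof.
  intros Ha Hg Hgr Hl.
  assert (Hmono : forall R R', (R <= R')%nat -> (g R <= g R')%nat).
  { intros R R' H. induction H; [lia|]. specialize (Hg m). lia. }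
  assert (Hup : forall R, sumR (g R) a <= L).
  { intros R. assert (Rbar_le (sumR (g R) a) L).
    { apply is_lim_seq_le_loc with (fun _ => sumR (g R) a) (fun R' => sumR (g R') a); auto.
      exists R. intros R' HR'. apply sumR_len_mono; auto.
      apply is_lim_seq_const. }
    simpl in H. exact H. }
  unfold is_series. apply (is_lim_seq_spec _ (Finite L)) in Hl. simpl in Hl.
  apply (is_lim_seq_spec (sum_n a) (Finite L)). simpl. intros eps.
  destruct (Hl eps) as [R0 HR0]. exists (g R0). intros N HN.
  rewrite sum_n_Reals, <- sumR_fR0.
  specialize (HR0 R0 (le_n _)). apply Rabs_def2 in HR0.
  assert (sumR (g R0) a <= sumR (S N) a) by (apply sumR_len_mono; auto; lia).
  assert (sumR (S N) a <= sumR (g (S N)) a) by (apply sumR_len_mono; auto).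
  pose proof (Hup (S N)). apply Rabs_def1; lra.
Qed.

Lemma irw_split b d k n r a : (2 <= b)%nat -> (1 <= n)%nat -> (a < b ^ r)%nat ->
  irwin_term b d k (n * b ^ r + a) = if Nat.eqb (kcount b d n + kpad b d r a) k then / (INR n * INR b ^ r + INR a) else 0.
Proof.
  intros Hb Hn Ha. unfold irwin_term. rewrite kcount_split by auto.
  assert (0 < n * b ^ r + a)%nat by (pose proof (Nat.pow_lower_bound b r); nia).
  destruct (Nat.ltb_spec 0 (n * b ^ r + a)); [|lia]. simpl andb.
  rewrite plus_INR, mult_INR, pow_INR. reflexivity.
Qed.

Definition Tr b d r j x := sumR (b ^ r) (fun a => if Nat.eqb (kpad b d r a) j then / (x * INR b ^ r + INR a) else 0).

Lemma level_sum b d k N0 N1 r : (2 <= b)%nat -> (1 <= N0)%nat ->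
  sumR (N1 * b ^ r) (fun x => if Nat.leb (N0 * b ^ r) x then irwin_term b d k x else 0) =
  sumR N1 (fun n => if andb (Nat.leb N0 n) (Nat.leb (kcount b d n) k) then Tr b d r (k - kcount b d n) (INR n) else 0).
Proof.
  intros Hb HN0. rewrite sumR_mul. apply sumR_ext. intros n Hn.
  destruct (Nat.leb_spec N0 n).
  - simpl andb. unfold Tr. destruct (Nat.leb_spec (kcount b d n) k).
    + apply sumR_ext. intros a Ha.
      destruct (Nat.leb_spec (N0 * b ^ r) (n * b ^ r + a)); [|nia].
      rewrite irw_split by (auto; lia).
      destruct (Nat.eqb_spec (kcount b d n + kpad b d r a) k); destruct (Nat.eqb_spec (kpad b d r a) (k - kcount b d n)); try lia; reflexivity.
    + rewrite (sumR_ext _ _ (fun _ => 0)). apply sumR_zero. intros a Ha.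
      destruct (Nat.leb_spec (N0 * b ^ r) (n * b ^ r + a)); [|nia].
      rewrite irw_split by (auto; lia).
      destruct (Nat.eqb_spec (kcount b d n + kpad b d r a) k); [lia|]. reflexivity.
  - simpl andb. rewrite (sumR_ext _ _ (fun _ => 0)). apply sumR_zero.
    intros a Ha. destruct (Nat.leb_spec (N0 * b ^ r) (n * b ^ r + a)); [|reflexivity].
    assert (n * b ^ r + a < N0 * b ^ r)%nat; [|lia].
    assert (S n * b ^ r <= N0 * b ^ r)%nat by (apply Nat.mul_le_mono_r; lia). simpl in H1. lia.
Qed.

Lemma partial_eq b d k N0 M : (2 <= b)%nat -> (1 <= N0)%nat ->
  sumR (N0 * b ^ M) (irwin_term b d k) = sumR N0 (irwin_term b d k) +
  sumR (b * N0) (fun n => if andb (Nat.leb N0 n) (Nat.leb (kcount b d n) k) then Tsum b d M (k - kcount b d n) (INR n) else 0).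
Proof.
  intros Hb HN0. induction M.
  - rewrite Nat.pow_0_r, Nat.mul_1_r. rewrite (sumR_ext (b * N0) _ (fun _ => 0)). rewrite sumR_zero; ring.
    intros n _. destruct (andb _ _); reflexivity.
  - rewrite (sumR_split_at (N0 * b ^ S M) (N0 * b ^ M)).
    2:{ apply Nat.mul_le_mono_l. simpl. pose proof (Nat.pow_lower_bound b M). nia. }
    rewrite IHM. replace (N0 * b ^ S M)%nat with ((b * N0) * b ^ M)%nat by (simpl; lia).
    rewrite level_sum by auto. rewrite Rplus_assoc, <- sumR_plus. f_equal. apply sumR_ext. intros n _.
    destruct (andb _ _); [|ring]. unfold Tsum, Tr. cbn [sumR]. reflexivity.
Qed.

Lemma Vser_shift b d j x : (2 <= b)%nat -> (d < b)%nat -> 1 <= x ->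
  is_series (fun m => Vser b d j x (S m)) (Phi b d j x - INR b / (x + 1)).
Proof.
  intros Hb Hd Hx. pose proof (Phi_correct b d j x Hb Hd Hx) as H.
  assert (E : Phi b d j x = plus (Phi b d j x - INR b / (x + 1)) (Vser b d j x 0)).
  { cbn. unfold Vser. rewrite v_j0 by auto. field. lra. }
  rewrite E in H. exact (is_series_incr_1 _ _ H).
Qed.

Lemma identity_part (b d : nat) (Hb : (2 <= b)%nat) (Hd : (d < b)%nat) :
  (forall l k : nat, (1 <= l)%nat ->
     let A := sumR (Nat.pow b (l - 1))
                (fun n => if andb (Nat.ltb 0 n) (Nat.eqb (kcount b d n) k)
                          then / INR n else 0) in
     let B := INR b * sumR (Nat.pow b l)
                (fun n => if andb (Nat.leb (Nat.pow b (l - 1)) n) (Nat.leb (kcount b d n) k)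
                          then / (INR n + 1) else 0) in
     let w := fun m' : nat => sumR (Nat.pow b l)
                (fun n => if andb (Nat.leb (Nat.pow b (l - 1)) n) (Nat.leb (kcount b d n) k)
                          then v b d (k - kcount b d n) (S m') / (INR n + 1) ^ (S (S m'))
                          else 0) in
     ex_series w /\ is_series (irwin_term b d k) (A + B + Series w) /\
     H b d k = A + B + Series w).
Proof.
  intros l k Hl. cbv zeta.
  set (N0 := Nat.pow b (l - 1)).
  assert (HN0 : (1 <= N0)%nat) by (apply Nat.pow_lower_bound; lia).
  assert (HN1 : Nat.pow b l = (b * N0)%nat) by (unfold N0; replace l with (S (l - 1)) at 1 by lia; reflexivity).
  rewrite HN1.
  set (A := sumR N0 (fun n => if andb (Nat.ltb 0 n) (Nat.eqb (kcount b d n) k) then / INR n else 0)).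
  set (B := INR b * sumR (b * N0) (fun n => if andb (Nat.leb N0 n) (Nat.leb (kcount b d n) k) then / (INR n + 1) else 0)).
  set (w := fun m' : nat => sumR (b * N0) (fun n => if andb (Nat.leb N0 n) (Nat.leb (kcount b d n) k)
                          then v b d (k - kcount b d n) (S m') / (INR n + 1) ^ (S (S m')) else 0)).
  set (cond := fun n => andb (Nat.leb N0 n) (Nat.leb (kcount b d n) k)).
  set (PhiS := sumR (b * N0) (fun n => if cond n then Phi b d (k - kcount b d n) (INR n) else 0)).
  assert (Hx : forall n, cond n = true -> 1 <= INR n).
  { intros n Hc. unfold cond in Hc. apply andb_prop in Hc as [Hc _]. apply Nat.leb_le in Hc.
    apply (le_INR 1). lia. }
  assert (HA : A = sumR N0 (irwin_term b d k)) by reflexivity.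
  assert (Hirw : is_series (irwin_term b d k) (A + PhiS)).
  { apply series_from_subseq with (g := fun M => (N0 * b ^ M)%nat).
    - intros n. unfold irwin_term. destruct n. simpl. lra. destruct (andb _ _); [|lra].
      apply Rlt_le, Rinv_0_lt_compat, (lt_INR 0); lia.
    - intros M. apply Nat.mul_le_mono_l. simpl. nia.
    - intros M. pose proof (Nat.pow_gt_lin_r b M ltac:(lia)). nia.
    - apply (is_lim_seq_ext (fun M => A + sumR (b * N0) (fun n => if cond n then Tsum b d M (k - kcount b d n) (INR n) else 0))).
      + intros M. rewrite partial_eq by auto. rewrite HA. reflexivity.
      + apply is_lim_seq_plus'. apply is_lim_seq_const.
        apply is_lim_seq_sumR. intros n _. specialize (Hx n). destruct (cond n).
        * apply Tsum_lim; auto.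
        * apply is_lim_seq_const. }
  set (Wsum := sumR (b * N0) (fun n => if cond n then Phi b d (k - kcount b d n) (INR n) - INR b / (INR n + 1) else 0)).
  assert (Hw : is_series w Wsum).
  { apply (is_series_ext (fun m => sumR (b * N0) (fun n => if cond n then Vser b d (k - kcount b d n) (INR n) (S m) else 0))).
    - intros m. unfold w. reflexivity.
    - apply is_series_sumR. intros n _. specialize (Hx n). destruct (cond n).
      + apply (is_series_ext (fun m => Vser b d (k - kcount b d n) (INR n) (S m))); [intros; reflexivity|].
        apply Vser_shift; auto.
      + apply (is_series_ext (fun _ => 0)); [intros; reflexivity|]. apply is_series_0. }
  assert (HE : A + B + Wsum = A + PhiS).
  { unfold B, Wsum, PhiS. rewrite <- sumR_scal, Rplus_assoc, <- sumR_plus. f_equal. apply sumR_ext. intros n _.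
    fold (cond n). destruct (cond n); [field|ring]. pose proof (pos_INR n). lra. }
  rewrite (is_series_unique _ _ Hw), HE.
  split; [exists Wsum; exact Hw|]. split; auto.
  unfold H. apply is_series_unique. auto.
Qed.

Theorem mainTheorem2 (b d : nat) (Hb : (2 <= b)%nat) (Hd : (d < b)%nat) :
  (* the identity, for every l >= 1, k >= 0 *)
  (forall l k : nat, (1 <= l)%nat ->
     let A := sumR (Nat.pow b (l - 1))
                (fun n => if andb (Nat.ltb 0 n) (Nat.eqb (kcount b d n) k)
                          then / INR n else 0) in
     let B := INR b * sumR (Nat.pow b l)
                (fun n => if andb (Nat.leb (Nat.pow b (l - 1)) n) (Nat.leb (kcount b d n) k)
                          then / (INR n + 1) else 0) in
     (* w m' is the term of index m = m' + 1 of the series over m >= 1 *)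
     let w := fun m' : nat => sumR (Nat.pow b l)
                (fun n => if andb (Nat.leb (Nat.pow b (l - 1)) n) (Nat.leb (kcount b d n) k)
                          then v b d (k - kcount b d n) (S m') / (INR n + 1) ^ (S (S m'))
                          else 0) in
     ex_series w /\ is_series (irwin_term b d k) (A + B + Series w) /\
     H b d k = A + B + Series w) /\
  (* (i) *)
  (forall j m : nat, (1 <= m)%nat -> 0 < v b d j m <= INR b) /\
  (* (ii) *)
  (forall j : nat,
     if andb (Nat.eqb b 2) (andb (Nat.eqb d 1) (Nat.eqb j 0))
     then forall m : nat, v b d 0 m = 2
     else forall m : nat, v b d j (S m) < v b d j m) /\
  (* (iii) *)
  (forall m : nat, (1 <= m)%nat ->
     (forall j : nat, v b d (S j) m < v b d j m) /\
     is_lim_seq (fun j => v b d j m) (INR b / (INR m + 1))).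

Proof.
  split; [apply identity_part; auto|].
  split; [intros j m _; apply vbound; auto|].
  split.
  - intros j. destruct (Nat.eqb_spec b 2); destruct (Nat.eqb_spec d 1); destruct (Nat.eqb_spec j 0); simpl;
      try (intros m; apply v_decr_m; auto; intros (? & ? & ?); lia).
    subst. intros m. apply v_const21.
  - intros m Hm. split.
    + intros j. apply v_decr_j; auto.
    + rewrite <- (ell_value b d m) by auto. apply ell_lim; auto.
Qed.
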